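(* The category $\underline{\mathrm{G}}$ of globally hyperbolic posets is equivalent to the category $\underline{\mathrm{IN}}$ of interval domains.
   Context: Order notions: directed/filtered sets, suprema $\bigsqcup$, infima $\bigwedge$, the way-below relation $x\ll y$ (for every directed $S$ with a supremum, $y\sqsubseteq\bigsqcup S$ implies $x\sqsubseteq s$ for some $s\in S$), $\Uparrow x=\{a:x\ll a\}$, $\Downarrow x=\{a:a\ll x\}$; a poset is continuous if some subset $B$ has $B\cap\Downarrow x$ containing a directed set with supremum $x$ for every $x$; a continuous dcpo additionally has suprema of all directed sets; $\max(D)$ is the set of maximal elements; the Scott topology consists of upper sets $U$ with $\bigsqcup S\in U\Rightarrow S\cap U\neq\emptyset$ for directed $S$. A continuous poset is bicontinuous if (1) $x\ll y$ iff for every filtered $S$ with an infimum, $\bigwedge S\sqsubseteq x$ implies $s\sqsubseteq y$ for some $s\in S$, and (2) each $\Uparrow x$ is filtered with infimum $x$; its interval topology has basis $\{z: a\ll z\ll b\}$. A globally hyperbolic poset is a bicontinuous poset $(X,\le)$ whose closed intervals $[a,b]=\{z:a\le z\le b\}$ are compact in the interval topology. $\underline{\mathrm{G}}$ is the category whose objects are globally hyperbolic posets and whose arrows are monotone maps continuous for the interval topologies (usual identities and composition). An interval poset is a poset $D$ with maps $\mathrm{left},\mathrm{right}:D\to\max(D)$ such that (writing $\sqcap$ for binary infimum, assumed to exist only where named) $x=\mathrm{left}(x)\sqcap\mathrm{right}(x)$; if $\mathrm{right}(x)=\mathrm{left}(y)$ then $\mathrm{left}(x\sqcap y)=\mathrm{left}(x)$,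 $\mathrm{right}(x\sqcap y)=\mathrm{right}(y)$; and for $p\in\max(D)$ with $x\sqsubseteq p$, $\mathrm{left}(\mathrm{left}(x)\sqcap p)=\mathrm{left}(x)$, $\mathrm{right}(\mathrm{left}(x)\sqcap p)=p$, $\mathrm{left}(p\sqcap\mathrm{right}(x))=p$, $\mathrm{right}(p\sqcap\mathrm{right}(x))=\mathrm{right}(x)$. Define $a\le b$ on $\max(D)$ iff $a=\mathrm{left}(z),b=\mathrm{right}(z)$ for some $z$; let $[p,\cdot]=\mathrm{left}^{-1}(p)$, $[\cdot,q]=\mathrm{right}^{-1}(q)$. An interval domain is an interval poset with $D$ a continuous dcpo such that: (i) if $p\in\Uparrow x\cap\max(D)$ then $\Uparrow(\mathrm{left}(x)\sqcap p)$ and $\Uparrow(p\sqcap\mathrm{right}(x))$ are nonempty; (ii) for each $x$, TFAE: $\Uparrow x\neq\emptyset$; for all $y\in[\mathrm{left}(x),\cdot]$ with $y\sqsubseteq x$, $y\ll\mathrm{right}(y)$ in the subposet $[\cdot,\mathrm{right}(y)]$; for all $y\in[\cdot,\mathrm{right}(x)]$ with $y\sqsubseteq x$, $y\ll\mathrm{left}(y)$ in the subposet $[\mathrm{left}(y),\cdot]$; (iii) for directed $S\subseteq[p,\cdot]$, $\mathrm{left}(\bigsqcup S)=p$ and $\mathrm{right}(\bigsqcup S)=\mathrm{right}(\bigsqcup T)$ for every directed $T\subseteq[q,\cdot]$ with $\mathrm{right}(T)=\mathrm{right}(S)$, and dually for directed $S\subseteq[\cdot,q]$, $\mathrm{right}(\bigsqcup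 S)=q$ and $\mathrm{left}(\bigsqcup S)=\mathrm{left}(\bigsqcup T)$ for every directed $T\subseteq[\cdot,p]$ with $\mathrm{left}(T)=\mathrm{left}(S)$; (iv) each $\{y\in\max(D):x\sqsubseteq y\}$ is Scott compact. $\underline{\mathrm{IN}}$ is the category of interval domains with arrows the Scott continuous maps $f:D\to E$ satisfying $f\circ\mathrm{left}_D=\mathrm{left}_E\circ f$ and $f\circ\mathrm{right}_D=\mathrm{right}_E\circ f$. Two categories are equivalent if there are functors in both directions whose composites are naturally isomorphic to the identity functors. *)

(* Defs.v *)
From Stdlib Require Import List.
Set Implicit Arguments.
Unset Strict Implicit.

Section Order.
Variable T : Type.
Variable le : T -> T -> Prop.

Definition is_partial_order : Prop :=
  (forall x, le x x) /\ (forall x y, le x y -> le y x -> x = y) /\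
  (forall x y z, le x y -> le y z -> le x z).

Definition directed (S : T -> Prop) : Prop :=
  (exists x, S x) /\ forall x y, S x -> S y -> exists z, S z /\ le x z /\ le y z.

Definition filtered (S : T -> Prop) : Prop :=
  (exists x, S x) /\ forall x y, S x -> S y -> exists z, S z /\ le z x /\ le z y.

Definition is_sup (S : T -> Prop) (s : T) : Prop :=
  (forall x, S x -> le x s) /\ forall u, (forall x, S x -> le x u) -> le s u.

Definition is_inf (S : T -> Prop) (i : T) : Prop :=
  (forall x, S x -> le i x) /\ forall u, (forall x, S x -> le u x) -> le u i.

Definition is_meet (a b m : T) : Prop :=
  le m a /\ le m b /\ forall u, le u a -> le u b -> le u m.

Definition way_below (x y : T) : Prop :=
  forall (S : T -> Prop) (s : T), directed S -> is_sup S s -> le y s ->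
    exists a, S a /\ le x a.

Definition wb_up (x : T) : T -> Prop := fun a => way_below x a.

Definition continuous_poset : Prop :=
  exists B : T -> Prop, forall x, exists S : T -> Prop,
    (forall a, S a -> B a /\ way_below a x) /\ directed S /\ is_sup S x.

Definition dcpo : Prop := forall S, directed S -> exists s, is_sup S s.

Definition continuous_dcpo : Prop := continuous_poset /\ dcpo.

Definition maximal (x : T) : Prop := forall y, le x y -> y = x.

Definition upper_set (U : T -> Prop) : Prop := forall x y, U x -> le x y -> U y.

Definition scott_open (U : T -> Prop) : Prop :=
  upper_set U /\
  forall S s, directed S -> is_sup S s -> U s -> exists a, S a /\ U a.

Definition bicontinuous : Prop :=
  continuous_poset /\
  (forall x y, way_below x y <->
     (forall (S : T -> Prop) (i : T), filtered S -> is_inf S i -> le i x ->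
        exists s, S s /\ le s y)) /\
  (forall x, filtered (wb_up x) /\ is_inf (wb_up x) x).

(* open sets of the interval topology: unions of basic sets {z : a ≪ z ≪ b} *)
Definition interval_open (U : T -> Prop) : Prop :=
  forall z, U z -> exists a b, way_below a z /\ way_below z b /\
    forall w, way_below a w -> way_below w b -> U w.

Definition compact_wrt (open : (T -> Prop) -> Prop) (K : T -> Prop) : Prop :=
  forall (I : Type) (U : I -> T -> Prop),
    (forall i, open (U i)) -> (forall x, K x -> exists i, U i x) ->
    exists l : list I, forall x, K x -> exists i, In i l /\ U i x.

Definition closed_interval (a b : T) : T -> Prop := fun z => le a z /\ le z b.

Definition globally_hyperbolic : Prop :=
  bicontinuous /\ forall a b, compact_wrt interval_open (closed_interval a b).

Definition is_sup_in (P S : T -> Prop) (s : T) : Prop :=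
  (forall x, S x -> le x s) /\ forall u, P u -> (forall x, S x -> le x u) -> le s u.

Definition way_below_in (P : T -> Prop) (x y : T) : Prop :=
  forall (S : T -> Prop) (s : T), (forall a, S a -> P a) -> directed S ->
    P s -> is_sup_in P S s -> le y s -> exists a, S a /\ le x a.

End Order.

Definition continuous_map (X Y : Type) (openX : (X -> Prop) -> Prop)
  (openY : (Y -> Prop) -> Prop) (f : X -> Y) : Prop :=
  forall V, openY V -> openX (fun x => V (f x)).

Section Interval.
Variable D : Type.
Variable le : D -> D -> Prop.
Variables left right : D -> D.

Record interval_poset_axioms : Prop := {
  ip_left_max : forall x, maximal le (left x);
  ip_right_max : forall x, maximal le (right x);
  ip_meet : forall x, is_meet le (left x) (right x) x;
  ip_concat : forall x y, right x = left y ->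
     exists m, is_meet le x y m /\ left m = left x /\ right m = right y;
  ip_split : forall x p, maximal le p -> le x p ->
     (exists m, is_meet le (left x) p m /\ left m = left x /\ right m = p) /\
     (exists m, is_meet le p (right x) m /\ left m = p /\ right m = right x)
}.

Definition left_fiber (p : D) : D -> Prop := fun z => left z = p.
Definition right_fiber (q : D) : D -> Prop := fun z => right z = q.

Record interval_domain_axioms : Prop := {
  idom_i : forall x p, maximal le p -> way_below le x p ->
     (forall m, is_meet le (left x) p m -> exists a, way_below le m a) /\
     (forall m, is_meet le p (right x) m -> exists a, way_below le m a);
  idom_ii : forall x,
     ((exists a, way_below le x a) <->
        (forall y, left y = left x -> le y x ->
           way_below_in le (right_fiber (right y)) y (right y))) /\
     ((exists a, way_below le x a) <->
        (forall y, right y = right x -> le y x ->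
           way_below_in le (left_fiber (left y)) y (left y)));
  idom_iii_left : forall p (S : D -> Prop) s,
     directed le S -> (forall a, S a -> left a = p) -> is_sup le S s ->
     left s = p /\
     forall q (T : D -> Prop) t,
       directed le T -> (forall a, T a -> left a = q) -> is_sup le T t ->
       (forall z, (exists a, T a /\ right a = z) <-> (exists a, S a /\ right a = z)) ->
       right s = right t;
  idom_iii_right : forall q (S : D -> Prop) s,
     directed le S -> (forall a, S a -> right a = q) -> is_sup le S s ->
     right s = q /\
     forall p (T : D -> Prop) t,
       directed le T -> (forall a, T a -> right a = p) -> is_sup le T t ->
       (forall z, (exists a, T a /\ left a = z) <-> (exists a, S a /\ left a = z)) ->
       left s = left t;
  idom_iv : forall x,
     compact_wrt (scott_open le) (fun y => maximal le y /\ le x y)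
}.

End Interval.

Record Category := {
  Ob : Type;
  Hom : Ob -> Ob -> Type;
  hom_eq : forall X Y, Hom X Y -> Hom X Y -> Prop;
  idm : forall X, Hom X X;
  comp : forall X Y Z, Hom Y Z -> Hom X Y -> Hom X Z
}.
Arguments Hom c _ _ : clear implicits.
Arguments hom_eq {c _ _} _ _.
Arguments idm c _ : clear implicits.
Arguments comp {c _ _ _} _ _.

Record Functor (C D : Category) := {
  fobj : Ob C -> Ob D;
  fmap : forall X Y, Hom C X Y -> Hom D (fobj X) (fobj Y);
  fmap_resp : forall X Y (f g : Hom C X Y),
     hom_eq f g -> hom_eq (fmap f) (fmap g);
  fmap_id : forall X, hom_eq (fmap (idm C X)) (idm D (fobj X));
  fmap_comp : forall X Y Z (g : Hom C Y Z) (f : Hom C X Y),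
     hom_eq (fmap (comp g f)) (comp (fmap g) (fmap f))
}.
Arguments fobj {C D} _ _.
Arguments fmap {C D} _ {X Y} _.

Definition iso_to_identity (C : Category) (FO : Ob C -> Ob C)
  (FM : forall X Y, Hom C X Y -> Hom C (FO X) (FO Y)) : Prop :=
  exists (a : forall X, Hom C (FO X) X) (b : forall X, Hom C X (FO X)),
    (forall X, hom_eq (comp (a X) (b X)) (idm C X)) /\
    (forall X, hom_eq (comp (b X) (a X)) (idm C (FO X))) /\
    (forall X Y (f : Hom C X Y),
        hom_eq (comp (a Y) (FM X Y f)) (comp f (a X))).

Definition equivalent (C D : Category) : Prop :=
  exists (F : Functor C D) (G : Functor D C),
    @iso_to_identity C (fun X => fobj G (fobj F X))
                    (fun X Y f => fmap G (fmap F f)) /\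
    @iso_to_identity D (fun Y => fobj F (fobj G Y))
                    (fun X Y f => fmap F (fmap G f)).

Record GHPoset := {
  gh_car :> Type;
  gh_le : gh_car -> gh_car -> Prop;
  gh_po : is_partial_order gh_le;
  gh_gh : globally_hyperbolic gh_le
}.

Record GMor (X Y : GHPoset) := {
  gm_fun :> X -> Y;
  gm_mono : forall x y, gh_le x y -> gh_le (gm_fun x) (gm_fun y);
  gm_cont : continuous_map (interval_open (@gh_le X))
                           (interval_open (@gh_le Y)) gm_fun
}.

Definition GMor_id (X : GHPoset) : GMor X X.
Proof.
  refine {| gm_fun := fun x => x |}; [ now auto | now intros V HV ].
Defined.

Definition GMor_comp (X Y Z : GHPoset) (g : GMor Y Z) (f : GMor X Y) : GMor X Z.
Proof.
  refine {| gm_fun := fun x => g (f x) |}.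
  - intros x y H; apply (gm_mono g), (gm_mono f), H.
  - intros V HV. apply (@gm_cont _ _ f (fun y => V (g y))). apply (@gm_cont _ _ g), HV.
Defined.

Definition G_cat : Category :=
  {| Ob := GHPoset; Hom := GMor;
     hom_eq := fun X Y (f g : GMor X Y) => forall x, f x = g x;
     idm := GMor_id; comp := GMor_comp |}.

Record IntervalDomain := {
  in_car :> Type;
  in_le : in_car -> in_car -> Prop;
  in_po : is_partial_order in_le;
  in_left : in_car -> in_car;
  in_right : in_car -> in_car;
  in_ip : interval_poset_axioms in_le in_left in_right;
  in_cdcpo : continuous_dcpo in_le;
  in_ax : interval_domain_axioms in_le in_left in_right
}.

Record INMor (D E : IntervalDomain) := {
  im_fun :> D -> E;
  im_scott : continuous_map (scott_open (@in_le D)) (scott_open (@in_le E)) im_fun;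
  im_left : forall x, im_fun (in_left x) = in_left (im_fun x);
  im_right : forall x, im_fun (in_right x) = in_right (im_fun x)
}.

Definition INMor_id (D : IntervalDomain) : INMor D D.
Proof.
  refine {| im_fun := fun x => x |}; [ now intros V HV | reflexivity | reflexivity ].
Defined.

Definition INMor_comp (D E F : IntervalDomain) (g : INMor E F) (f : INMor D E) : INMor D F.
Proof.
  refine {| im_fun := fun x => g (f x) |}.
  - intros V HV. apply (@im_scott _ _ f (fun y => V (g y))). apply (@im_scott _ _ g), HV.
  - intros x. now rewrite (im_left f), (im_left g).
  - intros x. now rewrite (im_right f), (im_right g).
Defined.

Definition IN_cat : Category :=
  {| Ob := IntervalDomain; Hom := INMor;
     hom_eq := fun D E (f g : INMor D E) => forall x, f x = g x;
     idm := INMor_id; comp := INMor_comp |}.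

(* Main.v *)
Require Import Defs.
From Stdlib Require Import List Classical ProofIrrelevance FunctionalExtensionality PropExtensionality IndefiniteDescription.
Set Implicit Arguments.
Unset Strict Implicit.

Section Gen.
Variable T : Type.
Variable le : T -> T -> Prop.
Hypothesis po : is_partial_order le.

Lemma le_refl x : le x x. Proof. apply po. Qed.
Lemma le_antisym x y : le x y -> le y x -> x = y. Proof. apply po. Qed.
Lemma le_trans x y z : le x y -> le y z -> le x z. Proof. apply po. Qed.

Lemma wb_le x y : way_below le x y -> le x y.
Proof.
  intro H. destruct (H (fun a => a = y) y) as [a [-> Ha]]; auto.
  - split; [exists y; auto|]. intros a b -> ->. exists y; auto using le_refl.
  - split; [intros a ->; apply le_refl| intros u Hu; apply Hu; auto].
  - apply le_refl.
Qed.

Lemma wb_mono x' x y y' : le x' x -> way_below le x y -> le y y' -> way_below le x' y'.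
Proof.
  intros H1 H2 H3 S s Hd Hs Hy. destruct (H2 S s Hd Hs) as [a [Sa Ha]].
  - eapply le_trans; eauto.
  - exists a; split; auto. eapply le_trans; eauto.
Qed.

Lemma wb_le_trans x y z : way_below le x y -> le y z -> way_below le x z.
Proof. intros; eapply wb_mono; eauto using le_refl. Qed.
Lemma le_wb_trans x y z : le x y -> way_below le y z -> way_below le x z.
Proof. intros; eapply wb_mono; eauto using le_refl. Qed.

Lemma sup_unique S a b : is_sup le S a -> is_sup le S b -> a = b.
Proof. intros [H1 H2] [H3 H4]. apply le_antisym; auto. Qed.
Lemma inf_unique S a b : is_inf le S a -> is_inf le S b -> a = b.
Proof. intros [H1 H2] [H3 H4]. apply le_antisym; auto. Qed.

Definition wb_down x := fun a => way_below le a x.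

Lemma approx_down x :
  (exists S, (forall a, S a -> way_below le a x) /\ directed le S /\ is_sup le S x) ->
  directed le (wb_down x) /\ is_sup le (wb_down x) x.
Proof.
  intros [S [HS [[[s0 Hs0] Hd] [Hub Hl]]]]. split; [split|split].
  - exists s0; apply HS; auto.
  - intros a b Ha Hb.
    destruct (Ha S x) as [s1 [S1 L1]]; [split; [exists s0; auto|auto]|split; auto|apply le_refl|].
    destruct (Hb S x) as [s2 [S2 L2]]; [split; [exists s0; auto|auto]|split; auto|apply le_refl|].
    destruct (Hd s1 s2 S1 S2) as [s3 [S3 [L3 L4]]].
    exists s3; split; [apply HS; auto|split; eapply le_trans; eauto].
  - intros a Ha; apply wb_le; auto.
  - intros u Hu. apply Hl. intros a Sa. apply Hu, HS, Sa.
Qed.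

Definition continuous_at_all :=
  forall x, directed le (wb_down x) /\ is_sup le (wb_down x) x.

Lemma cont_all : continuous_poset le -> continuous_at_all.
Proof.
  intros [B HB] x. apply approx_down. destruct (HB x) as [S [H1 [H2 H3]]].
  exists S; split; [intros a Sa; apply H1; auto| split; auto].
Qed.

Lemma interp : continuous_at_all -> forall x z, way_below le x z ->
  exists y, way_below le x y /\ way_below le y z.
Proof.
  intros C x z Hxz.
  set (Tset := fun e' => exists e, way_below le e z /\ way_below le e' e).
  destruct (Hxz Tset z) as [e' [[e [He1 He2]] Hle]].
  - split.
    + destruct (C z) as [[[e He] _] _]. destruct (C e) as [[[e' He'] _] _].
      exists e'; exists e; auto.
    + intros a b [e1 [E1 A1]] [e2 [E2 A2]].
      destruct (C z) as [[_ Hd] _]. destruct (Hd e1 e2 E1 E2) as [e3 [E3 [L1 L2]]].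
      assert (A1' : way_below le a e3) by (eapply wb_le_trans; eauto).
      assert (A2' : way_below le b e3) by (eapply wb_le_trans; eauto).
      destruct (C e3) as [[_ Hd3] _]. destruct (Hd3 a b A1' A2') as [c [Hc [L3 L4]]].
      exists c; split; auto. exists e3; auto.
  - split.
    + intros a [e [E1 E2]]. apply le_trans with e; apply wb_le; auto.
    + intros u Hu. destruct (C z) as [_ [_ Hz]]. apply Hz. intros e He.
      destruct (C e) as [_ [_ Hee]]. apply Hee. intros a Ha. apply Hu. exists e; auto.
  - apply le_refl.
  - exists e; split; auto. eapply le_wb_trans; eauto.
Qed.

End Gen.

Definition rev {T : Type} (le : T -> T -> Prop) : T -> T -> Prop := fun x y => le y x.

Section GH.
Variable T : Type.
Variable le : T -> T -> Prop.
Hypothesis po : is_partial_order le.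
Hypothesis gh : globally_hyperbolic le.
Let lrefl x : le x x := le_refl po x.
Hint Resolve lrefl : core.
Let ltrans := le_trans po.
Let lwb := wb_le po.

Lemma gh_cont : continuous_at_all le.
Proof. apply (cont_all po), gh. Qed.

Lemma up_fil x : filtered le (wb_up le x) /\ is_inf le (wb_up le x) x.
Proof. apply gh. Qed.

Lemma wb_dual x y : way_below le x y <->
  (forall S i, filtered le S -> is_inf le S i -> le i x -> exists s, S s /\ le s y).
Proof. apply gh. Qed.

Lemma down_ne z : exists c, way_below le c z.
Proof. destruct (gh_cont z) as [[[c Hc] _] _]. exists c; exact Hc. Qed.
Lemma up_ne z : exists c, way_below le z c.
Proof. destruct (up_fil z) as [[[c Hc] _] _]. exists c; exact Hc. Qed.

Lemma open_not_up (Q : Prop) a : interval_open le (fun z => Q /\ ~ le a z).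
Proof.
  intros z [HQ Hz]. destruct (down_ne z) as [c Hc].
  assert (exists d, way_below le z d /\ ~ le a d) as [d [Hd1 Hd2]].
  { apply NNPP; intro N. apply Hz. destruct (up_fil z) as [_ [_ Hinf]].
    apply Hinf. intros d Hd. apply NNPP; intro N2. apply N; exists d; auto. }
  exists c, d; split; auto; split; auto.
  intros w _ Hw; split; auto. intro Haw. apply Hd2. apply ltrans with w; auto.
Qed.

Lemma open_not_down (Q : Prop) u : interval_open le (fun z => Q /\ ~ le z u).
Proof.
  intros z [HQ Hz]. destruct (up_ne z) as [d Hd].
  assert (exists c, way_below le c z /\ ~ le c u) as [c [Hc1 Hc2]].
  { apply NNPP; intro N. apply Hz. destruct (gh_cont z) as [_ [_ Hsup]].
    apply Hsup. intros c Hc. apply NNPP; intro N2. apply N; exists c; auto. }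
  exists c, d; split; auto; split; auto.
  intros w Hw _; split; auto. intro Hwu. apply Hc2. apply ltrans with w; auto.
Qed.

Lemma dir_sup A b : directed le A -> (forall a, A a -> le a b) -> exists c, is_sup le A c.
Proof.
  intros [[a0 Ha0] Hd] Hb. apply NNPP; intro Nsup.
  set (U := fun (i : T + T) (z : T) => match i with
              | inl a => A a /\ ~ le a z
              | inr u => (forall a, A a -> le a u) /\ ~ le z u end).
  destruct (proj2 gh a0 b (T + T)%type U) as [l Hl].
  - intros [a|u]; simpl; [apply open_not_up|apply open_not_down].
  - intros z [Hz1 Hz2]. apply NNPP; intro N. apply Nsup. exists z. split.
    + intros a Ha. apply NNPP; intro N2. apply N. exists (inl a); simpl; auto.
    + intros u Hu. apply NNPP; intro N2. apply N. exists (inr u); simpl; auto.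
  - assert (exists k, A k /\ le a0 k /\ forall a, In (inl a) l -> A a -> le a k) as [k [Ak [Hk1 Hk2]]].
    { clear Hl. induction l as [|i l IH].
      - exists a0; split; auto; split; [auto|]. intros a [].
      - destruct IH as [k [Ak [Hk1 Hk2]]]. destruct i as [a|u].
        + destruct (classic (A a)) as [Aa|nAa].
          * destruct (Hd a k Aa Ak) as [k' [Ak' [L1 L2]]]. exists k'; split; auto; split.
            { eapply (le_trans po); eauto. }
            intros a' [E|E] Aa'. { inversion E; subst; auto. }
            eapply (le_trans po); eauto.
          * exists k; split; auto; split; auto. intros a' [E|E] Aa'.
            { inversion E; subst; contradiction. } auto.
        + exists k; split; auto; split; auto. intros a' [E|E] Aa'; [discriminate|auto]. }
    destruct (Hl k (conj Hk1 (Hb k Ak))) as [[a|u] [Hin HU]]; simpl in HU.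
    + destruct HU as [H1 H2]. apply H2. apply Hk2; auto.
    + destruct HU as [H1 H2]. apply H2. apply H1; auto.
Qed.

Lemma wb_rev x y : way_below (rev le) x y <-> way_below le y x.
Proof. split; intro H. - apply (proj2 (wb_dual y x)). exact H. - exact (proj1 (wb_dual y x) H). Qed.

Lemma interval_open_rev U : interval_open (rev le) U <-> interval_open le U.
Proof.
  split; intros H z Hz; destruct (H z Hz) as [a [b [H1 [H2 H3]]]]; exists b, a.
  - split; [apply wb_rev; auto|split; [apply wb_rev; auto|]].
    intros w W1 W2. apply H3; apply wb_rev; auto.
  - split; [apply wb_rev; auto|split; [apply wb_rev; auto|]].
    intros w W1 W2. apply H3; apply wb_rev; auto.
Qed.

Lemma po_rev : is_partial_order (rev le).
Proof.
  unfold rev; split; [intro; auto|split].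
  - intros x y H1 H2; apply (le_antisym po); auto.
  - intros x y z H1 H2; eapply (le_trans po); eauto.
Qed.

Lemma gh_rev : globally_hyperbolic (rev le).
Proof.
  split; [split; [|split]|].
  - exists (fun _ => True). intros x. exists (wb_up le x). split; [|exact (up_fil x)].
    intros a Ha; split; auto. apply wb_rev; exact Ha.
  - intros x y. rewrite wb_rev. split; intros H S i H1 H2 H3; exact (H S i H1 H2 H3).
  - intros x.
    assert (E : wb_up (rev le) x = wb_down le x).
    { apply functional_extensionality; intro a. apply propositional_extensionality.
      unfold wb_up, wb_down. apply wb_rev. }
    rewrite E. exact (gh_cont x).
  - intros a b I U HU Hc.
    destruct (proj2 gh b a I U) as [l Hl].
    + intros i; apply interval_open_rev, HU.
    + intros x [H1 H2]. apply Hc. split; auto.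
    + exists l. intros x [H1 H2]. apply Hl. split; auto.
Qed.

End GH.

Lemma fil_inf T (le : T -> T -> Prop) (po : is_partial_order le) (gh : globally_hyperbolic le) A b :
  filtered le A -> (forall a, A a -> le b a) -> exists c, is_inf le A c.
Proof. intros H1 H2. exact (dir_sup (po_rev po) (gh_rev po gh) H1 H2). Qed.

Section Mor.
Variables X Y : Type.
Variable leX : X -> X -> Prop.
Variable leY : Y -> Y -> Prop.
Hypothesis poX : is_partial_order leX.
Hypothesis poY : is_partial_order leY.
Hypothesis ghX : globally_hyperbolic leX.
Hypothesis ghY : globally_hyperbolic leY.
Variable f : X -> Y.
Hypothesis mono : forall x y, leX x y -> leY (f x) (f y).
Hypothesis cont : continuous_map (interval_open leX) (interval_open leY) f.

Lemma pres_sup L c : directed leX L -> is_sup leX L c ->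
  is_sup leY (fun y => exists x, L x /\ f x = y) (f c).
Proof.
  intros HL Hc.
  assert (Hd : directed leY (fun y => exists x, L x /\ f x = y)).
  { destruct HL as [[x0 Hx0] Hd]. split; [exists (f x0); exists x0; auto|].
    intros a b [x1 [L1 <-]] [x2 [L2 <-]]. destruct (Hd x1 x2 L1 L2) as [x3 [L3 [H1 H2]]].
    exists (f x3); split; [exists x3; auto|split; apply mono; auto]. }
  assert (Hb : forall a, (exists x, L x /\ f x = a) -> leY a (f c)).
  { intros a [x [Lx <-]]. apply mono, Hc, Lx. }
  destruct (dir_sup poY ghY Hd Hb) as [t Ht].
  assert (Hct : leY (f c) t).
  { apply NNPP; intro N.
    pose proof (open_not_down poY ghY (Q:=True) (u:=t)) as HO.
    destruct (@cont _ HO c (conj I N)) as [e [g [He [Hg Hn]]]].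
    destruct (interp poX (gh_cont poX ghX) He) as [e' [He1 He2]].
    destruct (He2 L c HL Hc (le_refl poX c)) as [l [Ll Hl]].
    destruct (Hn l) as [_ Hn'].
    - eapply (wb_le_trans poX); eauto.
    - eapply (le_wb_trans poX); eauto. apply Hc, Ll.
    - apply Hn'. apply Ht. exists l; auto. }
  split.
  - intros a [x [Lx <-]]. apply mono, Hc, Lx.
  - intros u Hu. apply (le_trans poY) with t; auto. apply Ht, Hu.
Qed.

End Mor.

Lemma pres_inf X Y (leX : X -> X -> Prop) (leY : Y -> Y -> Prop)
  (poX : is_partial_order leX) (poY : is_partial_order leY)
  (ghX : globally_hyperbolic leX) (ghY : globally_hyperbolic leY) (f : X -> Y)
  (mono : forall x y, leX x y -> leY (f x) (f y))
  (cont : continuous_map (interval_open leX) (interval_open leY) f) R d :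
  filtered leX R -> is_inf leX R d -> is_inf leY (fun y => exists x, R x /\ f x = y) (f d).
Proof.
  apply (pres_sup (po_rev poX) (po_rev poY) (gh_rev poX ghX) (gh_rev poY ghY) (f := f)).
  - intros x y H; apply mono, H.
  - intros V HV. apply (interval_open_rev ghX). apply cont. apply (interval_open_rev ghY), HV.
Qed.

Section IvalSec.
Variable T : Type.
Variable le : T -> T -> Prop.
Hypothesis po : is_partial_order le.
Hypothesis gh : globally_hyperbolic le.
Let lrefl x : le x x := le_refl po x.
Hint Resolve lrefl : core.
Let ltrans := le_trans po.
Let lwb := wb_le po.
Let C := gh_cont po gh.

Record Ival := mkI { lo : T; hi : T; ok : le lo hi }.

Definition leI (p q : Ival) := le (lo p) (lo q) /\ le (hi q) (hi p).
Definition leftI (p : Ival) := mkI (lrefl (lo p)).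
Definition rightI (p : Ival) := mkI (lrefl (hi p)).

Lemma Ival_eq p q : lo p = lo q -> hi p = hi q -> p = q.
Proof.
  destruct p as [a b h], q as [a' b' h']; simpl; intros <- <-.
  f_equal; apply proof_irrelevance.
Qed.

Lemma poI : is_partial_order leI.
Proof.
  unfold leI; split; [|split].
  - intros x; split; auto.
  - intros x y [H1 H2] [H3 H4]; apply Ival_eq; apply (le_antisym po); auto.
  - intros x y z [H1 H2] [H3 H4]; split; eapply ltrans; eauto.
Qed.

Lemma maxI p : maximal leI p <-> lo p = hi p.
Proof.
  split.
  - intros H. assert (E := H (leftI p)). simpl in E.
    assert (E2 : leftI p = p) by (apply E; split; simpl; auto; apply ok).
    rewrite <- E2 at 2. reflexivity.
  - intros E y [H1 H2]. apply Ival_eq.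
    + apply (le_antisym po); auto. rewrite E. eapply ltrans; [apply ok|exact H2].
    + apply (le_antisym po); auto. rewrite <- E. eapply ltrans; [exact H1|apply ok].
Qed.

Definition lefts (S : Ival -> Prop) := fun a => exists z, S z /\ lo z = a.
Definition rights (S : Ival -> Prop) := fun a => exists z, S z /\ hi z = a.

Lemma dir_lefts S : directed leI S -> directed le (lefts S).
Proof.
  intros [[z0 H0] Hd]. split; [exists (lo z0); exists z0; auto|].
  intros a b [z1 [S1 <-]] [z2 [S2 <-]]. destruct (Hd z1 z2 S1 S2) as [z3 [S3 [[L1 _] [L2 _]]]].
  exists (lo z3); split; [exists z3; auto|auto].
Qed.

Lemma fil_rights S : directed leI S -> filtered le (rights S).
Proof.
  intros [[z0 H0] Hd]. split; [exists (hi z0); exists z0; auto|].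
  intros a b [z1 [S1 <-]] [z2 [S2 <-]]. destruct (Hd z1 z2 S1 S2) as [z3 [S3 [[_ L1] [_ L2]]]].
  exists (hi z3); split; [exists z3; auto|auto].
Qed.

Lemma bound_lr S : directed leI S -> forall a b, lefts S a -> rights S b -> le a b.
Proof.
  intros [_ Hd] a b [z1 [S1 <-]] [z2 [S2 <-]].
  destruct (Hd z1 z2 S1 S2) as [z3 [S3 [[L1 _] [_ L2]]]].
  eapply ltrans; [exact L1|]. eapply ltrans; [apply ok|exact L2].
Qed.

Lemma I_sup_exists S : directed leI S ->
  exists s, is_sup leI S s /\ is_sup le (lefts S) (lo s) /\ is_inf le (rights S) (hi s).
Proof.
  intros HS. destruct HS as [[z0 H0] Hd] eqn:EHS.
  assert (Hb := bound_lr HS).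
  destruct (dir_sup po gh (A := lefts S) (b := hi z0) (dir_lefts HS)) as [c Hc].
  { intros a Ha. apply Hb; auto. exists z0; auto. }
  destruct (fil_inf po gh (A := rights S) (b := lo z0) (fil_rights HS)) as [d Hd'].
  { intros a Ha. apply Hb; auto. exists z0; auto. }
  assert (Hcd : le c d).
  { apply Hd'. intros r Hr. apply Hc. intros a Ha. apply Hb; auto. }
  exists (mkI Hcd); simpl. split; [|split; auto].
  split.
  - intros z Sz. split; simpl; [apply Hc|apply Hd']; [exists z|exists z]; auto.
  - intros u Hu. split; simpl.
    + apply Hc. intros a [z [Sz <-]]. apply Hu, Sz.
    + apply Hd'. intros a [z [Sz <-]]. apply Hu, Sz.
Qed.

Lemma I_sup_char S s : directed leI S -> is_sup leI S s ->
  is_sup le (lefts S) (lo s) /\ is_inf le (rights S) (hi s).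
Proof.
  intros HS Hs. destruct (I_sup_exists HS) as [s' [Hs' [H1 H2]]].
  rewrite (sup_unique poI Hs Hs'). auto.
Qed.

Definition approxI x := fun z => way_below le (lo z) (lo x) /\ way_below le (hi x) (hi z).

Lemma approxI_prop x : directed leI (approxI x) /\ is_sup leI (approxI x) x.
Proof.
  split; [split|split].
  - destruct (down_ne po gh (lo x)) as [a Ha]. destruct (up_ne gh (hi x)) as [b Hb].
    assert (Hab : le a b).
    { eapply ltrans; [apply lwb; exact Ha|]. eapply ltrans; [apply ok|apply lwb; exact Hb]. }
    exists (mkI Hab); split; auto.
  - intros z1 z2 [A1 B1] [A2 B2].
    destruct (C (lo x)) as [[_ Hd] _]. destruct (Hd _ _ A1 A2) as [a [Ha [L1 L2]]].
    destruct (up_fil gh (hi x)) as [[_ Hf] _]. destruct (Hf _ _ B1 B2) as [b [Hb [L3 L4]]].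
    assert (Hab : le a b).
    { eapply ltrans; [apply lwb; exact Ha|]. eapply ltrans; [apply ok|apply lwb; exact Hb]. }
    exists (mkI Hab); split; [split; auto|split; split; simpl; auto].
  - intros z [H1 H2]; split; apply lwb; auto.
  - intros u Hu. split.
    + destruct (C (lo x)) as [_ [_ Hs]]. apply Hs. intros a Ha.
      destruct (up_ne gh (hi x)) as [b Hb].
      assert (Hab : le a b).
      { eapply ltrans; [apply lwb; exact Ha|]. eapply ltrans; [apply ok|apply lwb; exact Hb]. }
      exact (proj1 (Hu (mkI Hab) (conj Ha Hb))).
    + destruct (up_fil gh (hi x)) as [_ [_ Hs]]. apply Hs. intros b Hb.
      destruct (down_ne po gh (lo x)) as [a Ha].
      assert (Hab : le a b).
      { eapply ltrans; [apply lwb; exact Ha|]. eapply ltrans; [apply ok|apply lwb; exact Hb]. }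
      exact (proj2 (Hu (mkI Hab) (conj Ha Hb))).
Qed.

Lemma I_wb x y : way_below leI x y <-> way_below le (lo x) (lo y) /\ way_below le (hi y) (hi x).
Proof.
  split.
  - intros H. destruct (approxI_prop y) as [Hd Hs].
    destruct (H _ _ Hd Hs (le_refl poI y)) as [z [[Z1 Z2] [L1 L2]]].
    split; [eapply le_wb_trans; eauto|eapply wb_le_trans; eauto].
  - intros [H1 H2] S s HS Hs [L1 L2].
    destruct (I_sup_char HS Hs) as [Hl Hr].
    destruct (H1 _ _ (dir_lefts HS) Hl L1) as [a [[z1 [S1 <-]] La]].
    destruct (proj1 (wb_dual gh (hi y) (hi x)) H2 _ _ (fil_rights HS) Hr L2) as [b [[z2 [S2 <-]] Lb]].
    destruct HS as [_ Hd]. destruct (Hd z1 z2 S1 S2) as [z3 [S3 [[M1 _] [_ M2]]]].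
    exists z3; split; auto. split; eapply ltrans; eauto.
Qed.

Lemma contI : continuous_poset leI.
Proof.
  exists (fun _ => True). intros x. exists (approxI x).
  split; [|apply approxI_prop]. intros a [H1 H2]; split; auto. apply I_wb; auto.
Qed.

Lemma dcpoI : dcpo leI.
Proof. intros S HS. destruct (I_sup_exists HS) as [s [H _]]. exists s; auto. Qed.

Lemma ipI : interval_poset_axioms leI leftI rightI.
Proof.
  constructor.
  - intros x. apply maxI; reflexivity.
  - intros x. apply maxI; reflexivity.
  - intros x. unfold leI; simpl. split; [split; auto; apply ok|split; [split; auto; apply ok|]].
    intros u [H1 H2] [H3 H4]; split; auto.
  - intros x y E. assert (E' : hi x = lo y) by (apply (f_equal lo) in E; exact E).
    assert (Hm : le (lo x) (hi y)).
    { eapply ltrans; [apply ok|]. rewrite E'. apply ok. }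
    exists (mkI Hm). split; [|split; apply Ival_eq; reflexivity].
    unfold is_meet, leI; simpl.
    split; [split; auto; rewrite E'; apply ok|split; [split; auto; rewrite <- E'; apply ok|]].
    intros u [H1 H2] [H3 H4]; split; auto.
  - intros x p Hp [L1 L2]. apply maxI in Hp. split.
    + exists (mkI L1). unfold leI; simpl. split.
      * split; [split; cbn; auto|split; [split; cbn; auto; rewrite Hp; auto|]].
        intros u [H1 H2] [H3 H4]; split; auto. simpl in *. rewrite Hp; auto.
      * split; apply Ival_eq; simpl; auto.
    + exists (mkI L2). unfold leI; simpl. split.
      * split; [split; cbn; auto; rewrite <- Hp; auto|split; [split; cbn; auto|]].
        intros u [H1 H2] [H3 H4]; split; auto. simpl in *. rewrite <- Hp; auto.
      * split; apply Ival_eq; simpl; auto.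
Qed.


Lemma ex_wbI x : (exists a, way_below leI x a) <-> way_below le (lo x) (hi x).
Proof.
  split.
  - intros [a Ha]. apply I_wb in Ha. destruct Ha as [H1 H2].
    eapply wb_mono; [exact po|apply lrefl|exact H1|].
    eapply ltrans; [apply ok|apply lwb; exact H2].
  - intros H. destruct (interp po C H) as [c [H1 H2]]. exists (mkI (lrefl c)).
    apply I_wb; simpl; auto.
Qed.

Lemma ax_ii1 x : (exists a, way_below leI x a) <->
  (forall y, leftI y = leftI x -> leI y x ->
     way_below_in leI (right_fiber rightI (rightI y)) y (rightI y)).
Proof.
  rewrite ex_wbI. split.
  - intros Hx y Ey [Ly1 Ly2] S s HSf HS Hsf Hsup [Ls1 Ls2].
    assert (Ely : lo y = lo x) by (apply (f_equal lo) in Ey; exact Ey).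
    assert (Hsh : hi s = hi y) by (apply (f_equal hi) in Hsf; exact Hsf).
    assert (Hzh : forall z, S z -> hi z = hi y) by (intros z Sz; exact (f_equal hi (HSf z Sz))).
    simpl in Ls1.
    destruct (dir_sup po gh (A := lefts S) (b := hi y) (dir_lefts HS)) as [c Hc].
    { intros a [z [Sz <-]]. rewrite <- (Hzh z Sz). apply ok. }
    assert (Hcb : le c (hi y)).
    { apply Hc. intros a [z [Sz <-]]. rewrite <- (Hzh z Sz). apply ok. }
    assert (Hsw : leI s (mkI Hcb)).
    { apply Hsup.
      - unfold right_fiber; apply Ival_eq; reflexivity.
      - intros z Sz. split; simpl; [apply Hc; exists z; auto|rewrite (Hzh z Sz); auto]. }
    destruct Hsw as [Hsw _]. simpl in Hsw.
    assert (Hwb : way_below le (lo x) c).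
    { eapply wb_mono; [exact po|apply lrefl|exact Hx|].
      eapply ltrans; [exact Ly2|]. eapply ltrans; [exact Ls1|exact Hsw]. }
    destruct (Hwb _ _ (dir_lefts HS) Hc (lrefl c)) as [a [[z [Sz <-]] Ha]].
    exists z; split; auto. split; [rewrite Ely; auto|rewrite (Hzh z Sz); auto].
  - intros H. set (b := hi x).
    set (Tset := fun z => hi z = b /\ way_below le (lo z) b).
    assert (HT : directed leI Tset).
    { split.
      - destruct (down_ne po gh b) as [a Ha]. exists (mkI (lwb Ha)); split; auto.
      - intros z1 z2 [E1 A1] [E2 A2].
        destruct (C b) as [[_ Hd] _]. destruct (Hd _ _ A1 A2) as [a [Ha [L1 L2]]].
        exists (mkI (lwb Ha)); split; [split; auto|].
        split; split; simpl; auto; [rewrite E1|rewrite E2]; auto. }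
    destruct (H x eq_refl (le_refl poI x) Tset (rightI x)) as [z [[Ez Hz] [Lz _]]].
    + intros z [Ez _]. unfold right_fiber. apply Ival_eq; simpl; auto.
    + exact HT.
    + unfold right_fiber. apply Ival_eq; reflexivity.
    + split.
      * intros z [Ez Hz]. split; simpl; [apply lwb; auto|rewrite Ez; auto].
      * intros u Hu Hub. unfold right_fiber in Hu. apply (f_equal hi) in Hu. simpl in Hu.
        split; simpl; [|rewrite Hu; auto].
        destruct (C b) as [_ [_ Hs]]. apply Hs. intros a Ha.
        exact (proj1 (Hub (mkI (lwb Ha)) (conj eq_refl Ha))).
    + apply (le_refl poI).
    + eapply le_wb_trans; [exact po|exact Lz|exact Hz].
Qed.

Lemma ax_ii2 x : (exists a, way_below leI x a) <->
  (forall y, rightI y = rightI x -> leI y x ->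
     way_below_in leI (left_fiber leftI (leftI y)) y (leftI y)).
Proof.
  rewrite ex_wbI. split.
  - intros Hx y Ey [Ly1 Ly2] S s HSf HS Hsf Hsup [Ls1 Ls2].
    assert (Ehy : hi y = hi x) by (apply (f_equal hi) in Ey; exact Ey).
    assert (Hsl : lo s = lo y) by (apply (f_equal lo) in Hsf; exact Hsf).
    assert (Hzl : forall z, S z -> lo z = lo y) by (intros z Sz; exact (f_equal lo (HSf z Sz))).
    simpl in Ls2.
    destruct (fil_inf po gh (A := rights S) (b := lo y) (fil_rights HS)) as [d Hd].
    { intros a [z [Sz <-]]. rewrite <- (Hzl z Sz). apply ok. }
    assert (Hbd : le (lo y) d).
    { apply Hd. intros a [z [Sz <-]]. rewrite <- (Hzl z Sz). apply ok. }
    assert (Hsw : leI s (mkI Hbd)).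
    { apply Hsup.
      - unfold left_fiber; apply Ival_eq; reflexivity.
      - intros z Sz. split; simpl; [rewrite (Hzl z Sz); auto|apply Hd; exists z; auto]. }
    destruct Hsw as [_ Hsw]. simpl in Hsw.
    assert (Hdx : le d (lo x)).
    { eapply ltrans; [exact Hsw|]. eapply ltrans; [exact Ls2|exact Ly1]. }
    destruct (proj1 (wb_dual gh (lo x) (hi x)) Hx _ _ (fil_rights HS) Hd Hdx) as [a [[z [Sz <-]] Ha]].
    exists z; split; auto. split; [rewrite (Hzl z Sz); auto|rewrite Ehy; auto].
  - intros H. set (a := lo x).
    set (Tset := fun z => lo z = a /\ way_below le a (hi z)).
    assert (HT : directed leI Tset).
    { split.
      - destruct (up_ne gh a) as [b Hb]. exists (mkI (lwb Hb)); split; auto.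
      - intros z1 z2 [E1 A1] [E2 A2].
        destruct (up_fil gh a) as [[_ Hf] _]. destruct (Hf _ _ A1 A2) as [b [Hb [L1 L2]]].
        exists (mkI (lwb Hb)); split; [split; auto|].
        split; split; simpl; auto; [rewrite E1|rewrite E2]; auto. }
    destruct (H x eq_refl (le_refl poI x) Tset (leftI x)) as [z [[Ez Hz] [_ Lz]]].
    + intros z [Ez _]. unfold left_fiber. apply Ival_eq; simpl; auto.
    + exact HT.
    + unfold left_fiber. apply Ival_eq; reflexivity.
    + split.
      * intros z [Ez Hz]. split; simpl; [rewrite Ez; auto|apply lwb; auto].
      * intros u Hu Hub. unfold left_fiber in Hu. apply (f_equal lo) in Hu. simpl in Hu.
        split; simpl; [rewrite Hu; auto|].
        destruct (up_fil gh a) as [_ [_ Hs]]. apply Hs. intros b Hb.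
        exact (proj2 (Hub (mkI (lwb Hb)) (conj eq_refl Hb))).
    + apply (le_refl poI).
    + eapply wb_le_trans; [exact po|exact Hz|exact Lz].
Qed.


Lemma ax_i x p : maximal leI p -> way_below leI x p ->
     (forall m, is_meet leI (leftI x) p m -> exists a, way_below leI m a) /\
     (forall m, is_meet leI p (rightI x) m -> exists a, way_below leI m a).
Proof.
  intros Hp Hxp. apply maxI in Hp. apply I_wb in Hxp. destruct Hxp as [H1 H2].
  split.
  - intros m [[M1 _] [[_ M2] _]]. simpl in M1.
    destruct (interp po C H1) as [e [E1 E2]]. exists (mkI (lrefl e)). apply I_wb; simpl. split.
    + eapply le_wb_trans; eauto.
    + eapply wb_le_trans; [exact po|exact E2|]. rewrite Hp; auto.
  - intros m [[M1 _] [[_ M2] _]]. simpl in M2.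
    destruct (interp po C H2) as [e [E1 E2]]. exists (mkI (lrefl e)). apply I_wb; simpl. split.
    + eapply le_wb_trans; [exact po| |exact E1]. rewrite <- Hp; auto.
    + eapply wb_le_trans; eauto.
Qed.

Lemma ax_iii_l p (S : Ival -> Prop) s :
     directed leI S -> (forall a, S a -> leftI a = p) -> is_sup leI S s ->
     leftI s = p /\
     forall q (T : Ival -> Prop) t,
       directed leI T -> (forall a, T a -> leftI a = q) -> is_sup leI T t ->
       (forall z, (exists a, T a /\ rightI a = z) <-> (exists a, S a /\ rightI a = z)) ->
       rightI s = rightI t.
Proof.
  intros HS HSp Hs. destruct (I_sup_char HS Hs) as [Hl Hr]. split.
  - destruct HS as [[z0 S0] _].
    assert (E0 := HSp z0 S0). subst p.
    assert (Hl' : is_sup le (lefts S) (lo z0)).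
    { split.
      - intros a [z [Sz <-]]. assert (E := f_equal lo (HSp z Sz)); simpl in E; rewrite E; auto.
      - intros u Hu. apply Hu. exists z0; auto. }
    apply Ival_eq; simpl; apply (sup_unique po Hl Hl').
  - intros q T0 t HT HTq Ht Hrr. destruct (I_sup_char HT Ht) as [_ Hr'].
    assert (Hrt : is_inf le (rights S) (hi t)).
    { split.
      + intros a [z [Sz <-]]. destruct (proj2 (Hrr (rightI z)) (ex_intro _ z (conj Sz eq_refl))) as [z' [Tz' E]].
        apply (f_equal hi) in E; simpl in E. rewrite <- E. apply Hr'. exists z'; auto.
      + intros u Hu. apply Hr'. intros a [z [Tz <-]].
        destruct (proj1 (Hrr (rightI z)) (ex_intro _ z (conj Tz eq_refl))) as [z' [Sz' E]].
        apply (f_equal hi) in E; simpl in E. rewrite <- E. apply Hu. exists z'; auto. }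
    apply Ival_eq; simpl; exact (inf_unique po Hr Hrt).
Qed.

Lemma ax_iii_r q (S : Ival -> Prop) s :
     directed leI S -> (forall a, S a -> rightI a = q) -> is_sup leI S s ->
     rightI s = q /\
     forall p (T : Ival -> Prop) t,
       directed leI T -> (forall a, T a -> rightI a = p) -> is_sup leI T t ->
       (forall z, (exists a, T a /\ leftI a = z) <-> (exists a, S a /\ leftI a = z)) ->
       leftI s = leftI t.
Proof.
  intros HS HSp Hs. destruct (I_sup_char HS Hs) as [Hl Hr]. split.
  - destruct HS as [[z0 S0] _].
    assert (E0 := HSp z0 S0). subst q.
    assert (Hr' : is_inf le (rights S) (hi z0)).
    { split.
      - intros a [z [Sz <-]]. assert (E := f_equal hi (HSp z Sz)); simpl in E; rewrite E; auto.
      - intros u Hu. apply Hu. exists z0; auto. }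
    apply Ival_eq; simpl; apply (inf_unique po Hr Hr').
  - intros p T0 t HT HTp Ht Hll. destruct (I_sup_char HT Ht) as [Hl' _].
    assert (Hlt : is_sup le (lefts S) (lo t)).
    { split.
      + intros a [z [Sz <-]]. destruct (proj2 (Hll (leftI z)) (ex_intro _ z (conj Sz eq_refl))) as [z' [Tz' E]].
        apply (f_equal lo) in E; simpl in E. rewrite <- E. apply Hl'. exists z'; auto.
      + intros u Hu. apply Hl'. intros a [z [Tz <-]].
        destruct (proj1 (Hll (leftI z)) (ex_intro _ z (conj Tz eq_refl))) as [z' [Sz' E]].
        apply (f_equal lo) in E; simpl in E. rewrite <- E. apply Hu. exists z'; auto. }
    apply Ival_eq; simpl; exact (sup_unique po Hl Hlt).
Qed.

Lemma ax_iv x : compact_wrt (scott_open leI) (fun y => maximal leI y /\ leI x y).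
Proof.
  intros I U HU Hc.
  set (V := fun i c => U i (mkI (lrefl c))).
  destruct (proj2 gh (lo x) (hi x) I V) as [l Hl].
  - intros i c Hc'. destruct (approxI_prop (mkI (lrefl c))) as [Hd Hs].
    destruct (proj2 (HU i) _ _ Hd Hs Hc') as [z [[Z1 Z2] Uz]]. simpl in Z1, Z2.
    exists (lo z), (hi z); split; auto; split; auto.
    intros w W1 W2. unfold V. apply (proj1 (HU i) z); auto. split; simpl; apply lwb; auto.
  - intros c [H1 H2]. apply Hc. split; [apply maxI; reflexivity|split; simpl; auto].
  - exists l. intros y [Hy [L1 L2]]. apply maxI in Hy.
    assert (Ey : y = mkI (lrefl (lo y))) by (apply Ival_eq; simpl; auto).
    destruct (Hl (lo y)) as [i [Hi Vi]].
    + split; auto. rewrite Hy. auto.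
    + exists i; split; auto. rewrite Ey. exact Vi.
Qed.

Lemma axI : interval_domain_axioms leI leftI rightI.
Proof.
  constructor.
  - exact ax_i.
  - intros x; split; [apply ax_ii1|apply ax_ii2].
  - exact ax_iii_l.
  - exact ax_iii_r.
  - exact ax_iv.
Qed.

End IvalSec.
Unset Implicit Arguments.

Definition MX {D : Type} (le : D -> D -> Prop) := {x : D | maximal le x}.
Definition lem {D : Type} (L R : D -> D) (a b : D) := exists z, L z = a /\ R z = b.
Definition leX {D : Type} (le : D -> D -> Prop) (L R : D -> D) (p q : MX le) :=
  lem L R (proj1_sig p) (proj1_sig q).

Lemma MX_eq {D : Type} (le : D -> D -> Prop) (p q : MX le) : proj1_sig p = proj1_sig q -> p = q.
Proof. destruct p, q; simpl; intros ->; f_equal; apply proof_irrelevance. Qed.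

Section B1.
Variable D : Type.
Variable le : D -> D -> Prop.
Variables L R : D -> D.
Hypothesis po : is_partial_order le.
Hypothesis ip : interval_poset_axioms le L R.
Hypothesis cd : continuous_dcpo le.
Hypothesis ax : interval_domain_axioms le L R.
Let lrefl x : le x x := le_refl po x.
Hint Resolve lrefl : core.
Let ltrans := le_trans po.

Lemma Lmax z : maximal le (L z). Proof. apply ip. Qed.
Lemma Rmax z : maximal le (R z). Proof. apply ip. Qed.

Lemma LL p : maximal le p -> L p = p.
Proof. intros Hp. apply Hp. destruct (ip_meet ip p) as [H _]. exact H. Qed.
Lemma RR p : maximal le p -> R p = p.
Proof. intros Hp. apply Hp. destruct (ip_meet ip p) as [_ [H _]]. exact H. Qed.

Lemma uniqD z z' : L z = L z' -> R z = R z' -> z = z'.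
Proof.
  intros E1 E2. destruct (ip_meet ip z) as [A1 [A2 A3]]. destruct (ip_meet ip z') as [B1 [B2 B3]].
  apply (le_antisym po).
  - apply B3; [rewrite <- E1|rewrite <- E2]; auto.
  - apply A3; [rewrite E1|rewrite E2]; auto.
Qed.

Lemma ends_of_le x y : le x y -> lem L R (L x) (L y) /\ lem L R (R y) (R x).
Proof.
  intros H. destruct (ip_meet ip y) as [H1 [H2 _]]. split.
  - destruct (proj1 (ip_split ip (Lmax y) (le_trans po H H1))) as [m [_ [E1 E2]]].
    exists m; auto.
  - destruct (proj2 (ip_split ip (Rmax y) (le_trans po H H2))) as [m [_ [E1 E2]]].
    exists m; auto.
Qed.

Lemma le_of_ends x y : lem L R (L x) (L y) -> lem L R (R y) (R x) -> le x y.
Proof.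
  intros [z1 [E1 E2]] [z2 [E3 E4]].
  destruct (ip_concat ip E2) as [m1 [[M1 [M2 _]] [F1 F2]]].
  assert (E : R m1 = L z2) by congruence.
  destruct (ip_concat ip E) as [m2 [[M3 [M4 _]] [F3 F4]]].
  assert (m2 = x) as <- by (apply uniqD; congruence).
  apply ltrans with m1; auto.
Qed.

Lemma lem_max a b : lem L R a b -> maximal le a /\ maximal le b.
Proof. intros [z [<- <-]]. split; [apply Lmax|apply Rmax]. Qed.

Lemma lem_refl p : maximal le p -> lem L R p p.
Proof. intros Hp. exists p; split; [apply LL|apply RR]; auto. Qed.

Lemma lem_trans a b c : lem L R a b -> lem L R b c -> lem L R a c.
Proof.
  intros [z1 [E1 E2]] [z2 [E3 E4]]. assert (E : R z1 = L z2) by congruence.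
  destruct (ip_concat ip E) as [m [_ [F1 F2]]]. exists m; split; congruence.
Qed.

Lemma lem_antisym a b : lem L R a b -> lem L R b a -> a = b.
Proof.
  intros [z1 [E1 E2]] [z2 [E3 E4]]. assert (E : R z1 = L z2) by congruence.
  destruct (ip_concat ip E) as [m [[M1 _] [F1 F2]]].
  assert (Ha : maximal le a) by (rewrite <- E1; apply Lmax).
  assert (m = a) as ->.
  { apply uniqD; [rewrite (LL a Ha); congruence|rewrite (RR a Ha); congruence]. }
  assert (z1 = a) by (apply Ha; exact M1). subst z1.
  rewrite <- E2, RR; auto.
Qed.

Lemma poX : is_partial_order (leX le L R).
Proof.
  unfold leX; split; [|split].
  - intros p. apply lem_refl, proj2_sig.
  - intros p q H1 H2. apply MX_eq, lem_antisym; auto.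
  - intros p q r H1 H2. eapply lem_trans; eauto.
Qed.

Definition mkL z : MX le := exist _ (L z) (Lmax z).
Definition mkR z : MX le := exist _ (R z) (Rmax z).

Definition leftsX (S : D -> Prop) := fun p : MX le => exists z, S z /\ L z = proj1_sig p.
Definition rightsX (S : D -> Prop) := fun p : MX le => exists z, S z /\ R z = proj1_sig p.

Lemma dir_leftsX S : directed le S -> directed (leX le L R) (leftsX S).
Proof.
  intros [[z0 H0] Hd]. split; [exists (mkL z0); exists z0; auto|].
  intros a b [z1 [S1 E1]] [z2 [S2 E2]]. destruct (Hd z1 z2 S1 S2) as [z3 [S3 [L1 L2]]].
  exists (mkL z3); split; [exists z3; auto|]. unfold leX; simpl; rewrite <- E1, <- E2.
  split; apply ends_of_le; auto.
Qed.

Lemma fil_rightsX S : directed le S -> filtered (leX le L R) (rightsX S).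
Proof.
  intros [[z0 H0] Hd]. split; [exists (mkR z0); exists z0; auto|].
  intros a b [z1 [S1 E1]] [z2 [S2 E2]]. destruct (Hd z1 z2 S1 S2) as [z3 [S3 [L1 L2]]].
  exists (mkR z3); split; [exists z3; auto|]. unfold leX; simpl; rewrite <- E1, <- E2.
  split; apply ends_of_le; auto.
Qed.

Definition Sb (S : D -> Prop) b := fun w => R w = b /\ exists z, S z /\ L w = L z.

Lemma Sb_dir S b : directed le S -> (forall z, S z -> lem L R (L z) b) -> directed le (Sb S b).
Proof.
  intros [[z0 H0] Hd] Hb. assert (Hbm : maximal le b) by (apply (lem_max _ _ (Hb z0 H0))).
  split.
  - destruct (Hb z0 H0) as [w [E1 E2]]. exists w; split; auto. exists z0; auto.
  - intros w1 w2 [F1 [z1 [S1 G1]]] [F2 [z2 [S2 G2]]].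
    destruct (Hd z1 z2 S1 S2) as [z3 [S3 [L1 L2]]].
    destruct (Hb z3 S3) as [w3 [E1 E2]].
    exists w3; split; [split; auto; exists z3; auto|].
    split; apply le_of_ends; rewrite ?G1, ?G2, ?F1, ?F2, ?E1, ?E2;
      try (apply lem_refl; auto); apply ends_of_le; auto.
Qed.

Lemma sup_ex S : directed le S -> exists s, is_sup le S s.
Proof. apply cd. Qed.

Lemma supD_lefts S s (c : MX le) : directed le S -> is_sup le S s -> proj1_sig c = L s ->
  is_sup (leX le L R) (leftsX S) c.
Proof.
  intros HS Hs Ec.
  assert (Hzs : forall z, S z -> lem L R (L z) (R s)).
  { intros z Sz. eapply lem_trans; [apply ends_of_le, Hs, Sz|]. exists s; auto. }
  destruct (sup_ex _ (Sb_dir _ _ HS Hzs)) as [s' Hs'].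
  assert (Es : s = s').
  { apply (le_antisym po).
    - apply Hs. intros z Sz. destruct (Hzs z Sz) as [w [E1 E2]].
      apply ltrans with w.
      + apply le_of_ends; rewrite ?E1, ?E2; [apply lem_refl, Lmax|apply ends_of_le, Hs, Sz].
      + apply Hs'. split; auto. exists z; auto.
    - apply Hs'. intros w [F1 [z [Sz G1]]]. apply le_of_ends; rewrite ?F1, ?G1.
      + apply ends_of_le, Hs, Sz.
      + apply lem_refl, Rmax. }
  split.
  - intros p [z [Sz Ez]]. unfold leX. rewrite Ec, <- Ez. apply ends_of_le, Hs, Sz.
  - intros u Hu.
    assert (Hzu : forall z, S z -> lem L R (L z) (proj1_sig u)).
    { intros z Sz. apply (Hu (mkL z)). exists z; auto. }
    destruct (sup_ex _ (Sb_dir _ _ HS Hzu)) as [t Ht].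
    destruct (idom_iii_right ax (Sb_dir _ _ HS Hzu) (q := proj1_sig u) (fun a H => proj1 H) Ht) as [Rt _].
    destruct (idom_iii_right ax (Sb_dir _ _ HS Hzs) (q := R s) (fun a H => proj1 H) Hs') as [_ H2].
    assert (Elt : L s' = L t).
    { apply (H2 (proj1_sig u) _ t (Sb_dir _ _ HS Hzu) (fun a H => proj1 H) Ht).
      intros y; split.
      - intros [a [[F1 [z [Sz G1]]] <-]]. destruct (Hzs z Sz) as [w [E1 E2]].
        exists w; split; [split; auto; exists z; auto|congruence].
      - intros [a [[F1 [z [Sz G1]]] <-]]. destruct (Hzu z Sz) as [w [E1 E2]].
        exists w; split; [split; auto; exists z; auto|congruence]. }
    unfold leX. rewrite Ec, Es, Elt, <- Rt. exists t; auto.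
Qed.


Lemma wbX_char z (p q : MX le) : proj1_sig p = L z -> proj1_sig q = R z ->
  ((exists a, way_below le z a) <-> way_below (leX le L R) p q).
Proof.
  intros Ep Eq. rewrite (proj1 (idom_ii ax z)). split.
  - intros H A s HA Hs Hqs.
    assert (Hpq : leX le L R p q) by (exists z; auto).
    assert (Hps : leX le L R p s) by (eapply lem_trans; eauto).
    destruct Hps as [y0 [Ey1 Ey2]].
    assert (Hy0 : le y0 z).
    { apply le_of_ends.
      - rewrite Ey1, <- Ep. apply lem_refl, proj2_sig.
      - rewrite Ey2, <- Eq. exact Hqs. }
    assert (Hsm : maximal le (proj1_sig s)) by apply proj2_sig.
    specialize (H y0 (eq_trans Ey1 Ep) Hy0).
    set (Ss := fun w => R w = proj1_sig s /\ exists a, A a /\ L w = proj1_sig a).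
    destruct (H Ss (proj1_sig s)) as [w [[Rw [a [Aa Lw]]] Hyw]].
    + intros w [Rw _]. unfold right_fiber. rewrite Rw, Ey2. reflexivity.
    + destruct HA as [[a0 Ha0] Hd]. split.
      * destruct (proj1 Hs a0 Ha0) as [w0 [F1 F2]]. exists w0; split; auto. exists a0; auto.
      * intros w1 w2 [R1 [a1 [A1 L1]]] [R2 [a2 [A2 L2]]].
        destruct (Hd a1 a2 A1 A2) as [a3 [A3 [M1 M2]]].
        destruct (proj1 Hs a3 A3) as [w3 [F1 F2]].
        exists w3; split; [split; auto; exists a3; auto|split].
        { apply le_of_ends; [rewrite L1, F1; exact M1|rewrite R1, F2; apply lem_refl; auto]. }
        { apply le_of_ends; [rewrite L2, F1; exact M2|rewrite R2, F2; apply lem_refl; auto]. }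
    + unfold right_fiber. rewrite (RR _ Hsm), Ey2. reflexivity.
    + split.
      * intros w [Rw [a [Aa Lw]]]. apply le_of_ends.
        -- rewrite Lw, (LL _ Hsm). apply (proj1 Hs a Aa).
        -- rewrite Rw, (RR _ Hsm). apply lem_refl; auto.
      * intros u Hu Hub. unfold right_fiber in Hu. rewrite Ey2 in Hu.
        apply le_of_ends.
        -- rewrite (LL _ Hsm). apply (proj2 Hs (mkL u)). intros a Aa.
           destruct (proj1 Hs a Aa) as [w [F1 F2]].
           assert (Hw : le w u) by (apply Hub; split; auto; exists a; auto).
           unfold leX; simpl. rewrite <- F1. apply (ends_of_le _ _ Hw).
        -- rewrite Hu, (RR _ Hsm). apply lem_refl; auto.
    + rewrite Ey2; auto.
    + exists a; split; auto. unfold leX. rewrite <- Ey1, <- Lw.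
      apply (ends_of_le _ _ Hyw).
  - intros H y Ey Hyz S s HSf HS Hsf Hsup Hys.
    assert (Es : s = R y) by (apply (Rmax y); exact Hys). subst s.
    destruct (sup_ex S HS) as [t Ht].
    destruct (idom_iii_right ax HS (fun a Ha => HSf a Ha) Ht) as [Rt _].
    assert (Et : R y = t).
    { apply (le_antisym po).
      - apply (proj2 Hsup t Rt (proj1 Ht)).
      - apply (proj2 Ht (R y) (proj1 Hsup)). }
    assert (Hsb : is_sup (leX le L R) (leftsX S) (mkR y)).
    { apply (supD_lefts S t (mkR y) HS Ht). simpl. rewrite <- Et, (LL _ (Rmax y)). reflexivity. }
    assert (Hqb : leX le L R q (mkR y)).
    { unfold leX; simpl. rewrite Eq. apply (ends_of_le _ _ Hyz). }
    destruct (H _ _ (dir_leftsX S HS) Hsb Hqb) as [a [[w [Sw Lw]] Hpa]].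
    exists w; split; auto. apply le_of_ends.
    + rewrite Ey, <- Ep, Lw. exact Hpa.
    + rewrite (HSf w Sw). apply lem_refl, Rmax.
Qed.

End B1.

Lemma meet_sym {D : Type} (le : D -> D -> Prop) a b m : is_meet le a b m -> is_meet le b a m.
Proof. intros [H1 [H2 H3]]; split; [|split]; auto. Qed.

Lemma ip_swap {D : Type} (le : D -> D -> Prop) L R :
  interval_poset_axioms le L R -> interval_poset_axioms le R L.
Proof.
  intros ip. constructor.
  - exact (ip_right_max ip).
  - exact (ip_left_max ip).
  - intros x. apply meet_sym, (ip_meet ip).
  - intros x y E. destruct (ip_concat ip (x := y) (y := x) (eq_sym E)) as [m [Hm [E1 E2]]].
    exists m; split; [apply meet_sym; auto|auto].
  - intros x p Hp Hxp. destruct (ip_split ip Hp Hxp) as [[m1 [H1 [E1 E2]]] [m2 [H2 [E3 E4]]]].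
    split; [exists m2|exists m1]; split; try (apply meet_sym; auto); auto.
Qed.

Lemma ax_swap {D : Type} (le : D -> D -> Prop) L R :
  interval_domain_axioms le L R -> interval_domain_axioms le R L.
Proof.
  intros ax. constructor.
  - intros x p Hp Hxp. destruct (idom_i ax Hp Hxp) as [A B].
    split; intros m Hm; [apply B|apply A]; apply meet_sym; auto.
  - intros x. destruct (idom_ii ax x) as [A B]. split; [exact B|exact A].
  - exact (idom_iii_right ax).
  - exact (idom_iii_left ax).
  - exact (idom_iv ax).
Qed.

Lemma leX_swap {D : Type} (le : D -> D -> Prop) L R : leX le R L = rev (leX le L R).
Proof.
  apply functional_extensionality; intro p; apply functional_extensionality; intro q.
  apply propositional_extensionality. unfold leX, lem, rev.
  split; intros [z [E1 E2]]; exists z; auto.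
Qed.

Section B2.
Variable D : Type.
Variable le : D -> D -> Prop.
Variables L R : D -> D.
Hypothesis po : is_partial_order le.
Hypothesis ip : interval_poset_axioms le L R.
Hypothesis cd : continuous_dcpo le.
Hypothesis ax : interval_domain_axioms le L R.
Let lrefl x : le x x := le_refl po x.
Hint Resolve lrefl : core.
Let lx := leX le L R.
Let pox : is_partial_order lx := poX D le L R po ip.

Lemma supD_rights S s (c : MX le) : directed le S -> is_sup le S s -> proj1_sig c = R s ->
  is_inf lx (rightsX D le R S) c.
Proof.
  intros HS Hs Ec.
  pose proof (supD_lefts D le R L po (ip_swap le L R ip) cd (ax_swap le L R ax) S s c HS Hs Ec) as H.
  rewrite leX_swap in H. exact H.
Qed.

Lemma wbX_char_r z (p q : MX le) : proj1_sig p = L z -> proj1_sig q = R z ->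
  ((exists a, way_below le z a) <-> way_below (rev lx) q p).
Proof.
  intros Ep Eq.
  pose proof (wbX_char D le R L po (ip_swap le L R ip) cd (ax_swap le L R ax) z q p Eq Ep) as H.
  rewrite leX_swap in H. exact H.
Qed.

Lemma X1' x y : way_below lx x y <-> way_below (rev lx) y x.
Proof.
  destruct (classic (lx x y)) as [[z [E1 E2]]|N].
  - rewrite <- (wbX_char_r z x y (eq_sym E1) (eq_sym E2)).
    unfold lx. rewrite <- (wbX_char D le L R po ip cd ax z x y (eq_sym E1) (eq_sym E2)). reflexivity.
  - split; intro H; exfalso; apply N.
    + exact (wb_le pox H).
    + exact (wb_le (po_rev pox) H).
Qed.

Lemma X1 x y : way_below lx x y <->
  (forall S i, filtered lx S -> is_inf lx S i -> lx i x -> exists s, S s /\ lx s y).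
Proof. exact (X1' x y). Qed.

Lemma approxX (x : MX le) : exists S, directed le S /\ is_sup le S (proj1_sig x) /\
  forall z, S z -> way_below lx (mkL D le L R ip z) x /\ way_below lx x (mkR D le L R ip z).
Proof.
  destruct cd as [[B HB] _]. destruct (HB (proj1_sig x)) as [S [HS1 [HS2 HS3]]].
  exists S; split; auto; split; auto. intros z Sz.
  destruct (HS1 z Sz) as [_ Hwb].
  assert (Hm : maximal le (proj1_sig x)) by apply proj2_sig.
  destruct (idom_i ax Hm Hwb) as [A1 A2].
  destruct (ends_of_le D le L R po ip z _ (wb_le po Hwb)) as [[m0 [F1 F2]] [m1 [G1 G2]]].
  split.
  - assert (Hmeet : is_meet le (L z) (proj1_sig x) m0).
    { pose proof (ip_meet ip m0) as Hm0. rewrite F1, F2, (LL D le L R ip _ Hm) in Hm0. exact Hm0. }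
    destruct (A1 m0 Hmeet) as [a Ha].
    assert (E1' : proj1_sig (mkL D le L R ip z) = L m0) by (simpl; auto).
    assert (E2' : proj1_sig x = R m0) by (rewrite F2, (LL D le L R ip _ Hm); auto).
    exact (proj1 (wbX_char D le L R po ip cd ax m0 _ _ E1' E2') (ex_intro _ a Ha)).
  - assert (Hmeet : is_meet le (proj1_sig x) (R z) m1).
    { pose proof (ip_meet ip m1) as Hm1. rewrite G1, G2, (RR D le L R ip _ Hm) in Hm1. exact Hm1. }
    destruct (A2 m1 Hmeet) as [a Ha].
    assert (E1' : proj1_sig x = L m1) by (rewrite G1, (RR D le L R ip _ Hm); auto).
    assert (E2' : proj1_sig (mkR D le L R ip z) = R m1) by (simpl; auto).
    exact (proj1 (wbX_char D le L R po ip cd ax m1 _ _ E1' E2') (ex_intro _ a Ha)).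
Qed.

Lemma contX : continuous_poset lx.
Proof.
  exists (fun _ => True). intros x. destruct (approxX x) as [S [HS [Hs Hz]]].
  exists (leftsX D le L S). split; [|split].
  - intros p [z [Sz Ez]]. split; auto.
    assert (p = mkL D le L R ip z) as -> by (apply MX_eq; simpl; auto).
    apply Hz, Sz.
  - apply dir_leftsX; auto.
  - apply (supD_lefts D le L R po ip cd ax S (proj1_sig x) x HS Hs).
    symmetry; apply (LL D le L R ip), proj2_sig.
Qed.

Lemma X2 x : filtered lx (wb_up lx x) /\ is_inf lx (wb_up lx x) x.
Proof.
  assert (E : wb_up lx x = wb_down (rev lx) x).
  { apply functional_extensionality; intro a. apply propositional_extensionality.
    unfold wb_up, wb_down. apply X1'. }
  rewrite E.
  apply (approx_down (po_rev pox)).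
  destruct (approxX x) as [S [HS [Hs Hz]]].
  exists (rightsX D le R S). split; [|split].
  - intros p [z [Sz Ez]].
    assert (p = mkR D le L R ip z) as -> by (apply MX_eq; simpl; auto).
    apply X1', Hz, Sz.
  - apply (fil_rightsX D le L R po ip); auto.
  - apply (supD_rights S (proj1_sig x) x HS Hs).
    symmetry; apply (RR D le L R ip), proj2_sig.
Qed.


Let mL := mkL D le L R ip.
Let mR := mkR D le L R ip.
Let Cx : continuous_at_all lx := cont_all pox contX.

Lemma mL_mono w w' : le w w' -> lx (mL w) (mL w').
Proof. intros H. apply (ends_of_le D le L R po ip w w' H). Qed.
Lemma mR_mono w w' : le w w' -> lx (mR w') (mR w).
Proof. intros H. apply (ends_of_le D le L R po ip w w' H). Qed.

Lemma scottU (P : MX le -> MX le -> Prop) :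
  scott_open le (fun w => exists e g, P e g /\ way_below lx e (mL w) /\ way_below lx (mR w) g).
Proof.
  split.
  - intros w w' [e [g [HP [H1 H2]]]] Hw. exists e, g; split; auto; split.
    + eapply (wb_le_trans pox); [exact H1|apply mL_mono; auto].
    + eapply (le_wb_trans pox); [apply mR_mono; exact Hw|exact H2].
  - intros S s HS Hs [e [g [HP [H1 H2]]]].
    destruct (interp pox Cx H1) as [e' [He1 He2]].
    assert (Hsl := supD_lefts D le L R po ip cd ax S s (mL s) HS Hs eq_refl).
    destruct (He2 _ _ (dir_leftsX D le L R po ip S HS) Hsl (le_refl pox _)) as [l [[z1 [S1 El]] Hl]].
    assert (l = mL z1) as -> by (apply MX_eq; simpl; auto).
    destruct (interp pox Cx H2) as [g' [Hg1 Hg2]].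
    assert (Hsr := supD_rights S s (mR s) HS Hs eq_refl).
    destruct (proj1 (X1 _ _) Hg1 _ _ (fil_rightsX D le L R po ip S HS) Hsr (le_refl pox _)) as [r [[z2 [S2 Er]] Hr]].
    assert (r = mR z2) as -> by (apply MX_eq; simpl; auto).
    destruct HS as [_ Hd]. destruct (Hd z1 z2 S1 S2) as [z3 [S3 [L1 L2]]].
    exists z3; split; auto. exists e, g; split; auto; split.
    + eapply (wb_le_trans pox); [exact He1|]. eapply (le_trans pox); [exact Hl|apply mL_mono; auto].
    + eapply (le_wb_trans pox); [|exact Hg2]. eapply (le_trans pox); [apply mR_mono; exact L2|exact Hr].
Qed.

Lemma compactX a b : compact_wrt (interval_open lx) (closed_interval lx a b).
Proof.
  destruct (classic (lx a b)) as [[z [Ea Eb]]|N].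
  - intros I U HU Hc.
    set (U' := fun i w => exists e g, (forall v, way_below lx e v -> way_below lx v g -> U i v) /\
                 way_below lx e (mL w) /\ way_below lx (mR w) g).
    assert (HU' : forall i, scott_open le (U' i)) by (intros i; apply scottU).
    destruct (idom_iv ax (x := z) (I := I) (U := U') HU') as [l Hl].
    + intros y [Hy Hzy].
      assert (Ey : mL y = exist _ y Hy) by (apply MX_eq; simpl; apply (LL D le L R ip _ Hy)).
      assert (Ey' : mR y = exist _ y Hy) by (apply MX_eq; simpl; apply (RR D le L R ip _ Hy)).
      destruct (Hc (exist _ y Hy)) as [i Hi].
      * split.
        -- unfold lx, leX, lem. rewrite <- Ea. rewrite <- Ey. apply mL_mono; auto.
        -- unfold lx, leX, lem. rewrite <- Eb. rewrite <- Ey'. apply mR_mono; auto.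
      * exists i. destruct (HU i _ Hi) as [e [g [H1 [H2 H3]]]].
        exists e, g; split; auto. rewrite Ey, Ey'; auto.
    + exists l. intros c [Hac Hcb].
      assert (Hm : maximal le (proj1_sig c)) by apply proj2_sig.
      assert (Ec : mL (proj1_sig c) = c) by (apply MX_eq; simpl; apply (LL D le L R ip _ Hm)).
      assert (Ec' : mR (proj1_sig c) = c) by (apply MX_eq; simpl; apply (RR D le L R ip _ Hm)).
      destruct (Hl (proj1_sig c)) as [i [Hi [e [g [H1 [H2 H3]]]]]].
      * split; auto. apply (le_of_ends D le L R po ip).
        -- rewrite Ea, (LL D le L R ip _ Hm). exact Hac.
        -- rewrite Eb, (RR D le L R ip _ Hm). exact Hcb.
      * exists i; split; auto. apply H1; [rewrite <- Ec|rewrite <- Ec']; auto.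
  - intros I U _ _. exists nil. intros c [H1 H2]. exfalso. apply N.
    exact (le_trans pox H1 H2).
Qed.

Lemma ghX : globally_hyperbolic lx.
Proof.
  split; [split; [exact contX|split; [exact X1|exact X2]]|exact compactX].
Qed.

End B2.

Section Iso.
Variables A B : Type.
Variable leA : A -> A -> Prop.
Variable leB : B -> B -> Prop.
Variable f : A -> B.
Variable g : B -> A.
Hypothesis fg : forall b, f (g b) = b.
Hypothesis gf : forall a, g (f a) = a.
Hypothesis mf : forall x y, leA x y -> leB (f x) (f y).
Hypothesis mg : forall x y, leB x y -> leA (g x) (g y).

Lemma iso_sup S s : is_sup leB S s -> is_sup leA (fun a => exists b, S b /\ g b = a) (g s).
Proof.
  intros [H1 H2]. split.
  - intros a [b [Sb <-]]. apply mg, H1, Sb.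
  - intros u Hu. rewrite <- (gf u). apply mg, H2. intros b Sb. rewrite <- (fg b). apply mf, Hu.
    exists b; auto.
Qed.

Lemma iso_dir S : directed leB S -> directed leA (fun a => exists b, S b /\ g b = a).
Proof.
  intros [[b0 H0] Hd]. split; [exists (g b0); exists b0; auto|].
  intros a1 a2 [b1 [S1 <-]] [b2 [S2 <-]]. destruct (Hd b1 b2 S1 S2) as [b3 [S3 [L1 L2]]].
  exists (g b3); split; [exists b3; auto|split; apply mg; auto].
Qed.

Lemma iso_wb x y : way_below leA x y -> way_below leB (f x) (f y).
Proof.
  intros H S s HS Hs Hy.
  destruct (H _ _ (iso_dir S HS) (iso_sup S s Hs)) as [a [[b [Sb <-]] Hb]].
  - rewrite <- (gf y). apply mg, Hy.
  - exists b; split; auto. rewrite <- (fg b). apply mf, Hb.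
Qed.


Lemma iso_scott : continuous_map (scott_open leA) (scott_open leB) f.
Proof.
  intros V [HV1 HV2]. split.
  - intros x y Hx Hxy. eapply HV1; eauto.
  - intros S s HS Hs Hfs.
    assert (HS' : directed leB (fun b => exists a, S a /\ f a = b)).
    { destruct HS as [[a0 H0] Hd]. split; [exists (f a0); exists a0; auto|].
      intros b1 b2 [a1 [S1 <-]] [a2 [S2 <-]]. destruct (Hd a1 a2 S1 S2) as [a3 [S3 [L1 L2]]].
      exists (f a3); split; [exists a3; auto|split; apply mf; auto]. }
    assert (Hs' : is_sup leB (fun b => exists a, S a /\ f a = b) (f s)).
    { destruct Hs as [H1 H2]. split.
      - intros b [a [Sa <-]]. apply mf, H1, Sa.
      - intros u Hu. rewrite <- (fg u). apply mf, H2. intros a Sa. rewrite <- (gf a). apply mg, Hu.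
        exists a; auto. }
    destruct (HV2 _ _ HS' Hs' Hfs) as [b [[a [Sa <-]] Hb]]. exists a; auto.
Qed.

End Iso.

Lemma iso_int_cont A B (leA : A -> A -> Prop) (leB : B -> B -> Prop) (f : A -> B) (g : B -> A)
  (fg : forall b, f (g b) = b) (gf : forall a, g (f a) = a)
  (mf : forall x y, leA x y -> leB (f x) (f y)) (mg : forall x y, leB x y -> leA (g x) (g y)) :
  continuous_map (interval_open leA) (interval_open leB) f.
Proof.
  intros V HV x Hx. destruct (HV _ Hx) as [e [h [H1 [H2 H3]]]].
  exists (g e), (g h). split; [|split].
  - rewrite <- (gf x). apply (iso_wb B A leB leA g f gf fg mg mf); auto.
  - rewrite <- (gf x). apply (iso_wb B A leB leA g f gf fg mg mf); auto.
  - intros w W1 W2. apply H3.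
    + rewrite <- (fg e). apply (iso_wb A B leA leB f g fg gf mf mg); auto.
    + rewrite <- (fg h). apply (iso_wb A B leA leB f g fg gf mf mg); auto.
Qed.

Lemma scott_mono A B (leA : A -> A -> Prop) (leB : B -> B -> Prop) (poB : is_partial_order leB)
  (f : A -> B) : continuous_map (scott_open leA) (scott_open leB) f ->
  forall x y, leA x y -> leB (f x) (f y).
Proof.
  intros Hf x y Hxy. apply NNPP; intro N.
  assert (HV : scott_open leB (fun z => ~ leB z (f y))).
  { split.
    - intros z z' Hz Hzz' H. apply Hz. eapply (le_trans poB); eauto.
    - intros S s HS Hs Hn. apply NNPP; intro N2. apply Hn. apply Hs. intros a Sa.
      apply NNPP; intro N3. apply N2. exists a; auto. }
  destruct (Hf _ HV) as [Hup _]. apply (Hup x y N Hxy). apply (le_refl poB).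
Qed.

Definition Fobj (X : GHPoset) : IntervalDomain :=
  {| in_car := Ival (@gh_le X);
     in_le := @leI X (@gh_le X);
     in_po := poI (gh_po X);
     in_left := leftI (gh_po X);
     in_right := rightI (gh_po X);
     in_ip := ipI (gh_po X);
     in_cdcpo := conj (contI (gh_po X) (gh_gh X)) (dcpoI (gh_po X) (gh_gh X));
     in_ax := axI (gh_po X) (gh_gh X) |}.

Definition Ffun (X Y : GHPoset) (f : GMor X Y) (p : Ival (@gh_le X)) : Ival (@gh_le Y) :=
  mkI (@gm_mono X Y f (lo p) (hi p) (ok p)).

Lemma Ffun_mono (X Y : GHPoset) (f : GMor X Y) p q :
  leI p q -> leI (Ffun X Y f p) (Ffun X Y f q).
Proof. intros [H1 H2]. split; simpl; apply (@gm_mono X Y f); auto. Qed.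

Lemma F_scott (X Y : GHPoset) (f : GMor X Y) :
  continuous_map (scott_open (@leI X (@gh_le X))) (scott_open (@leI Y (@gh_le Y))) (Ffun X Y f).
Proof.
  intros V [HV1 HV2]. split.
  - intros p q Hp Hpq. eapply HV1; [exact Hp|apply Ffun_mono; auto].
  - intros S s HS Hs Hfs.
    set (S' := fun y => exists x, S x /\ Ffun X Y f x = y).
    assert (HS' : directed (@leI _ (@gh_le Y)) S').
    { destruct HS as [[a0 H0] Hd]. split; [exists (Ffun X Y f a0); exists a0; auto|].
      intros b1 b2 [a1 [S1 <-]] [a2 [S2 <-]]. destruct (Hd a1 a2 S1 S2) as [a3 [S3 [L1 L2]]].
      exists (Ffun X Y f a3); split; [exists a3; auto|split; apply Ffun_mono; auto]. }
    destruct (I_sup_char (gh_po X) (gh_gh X) HS Hs) as [Hl Hr].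
    assert (Hmono : forall x y, gh_le x y -> gh_le (f x) (f y)) by (apply (@gm_mono X Y f)).
    pose proof (pres_sup (gh_po X) (gh_po Y) (gh_gh X) (gh_gh Y) Hmono (@gm_cont X Y f)
                  (dir_lefts HS) Hl) as Hl'.
    pose proof (pres_inf (gh_po X) (gh_po Y) (gh_gh X) (gh_gh Y) Hmono (@gm_cont X Y f)
                  (fil_rights HS) Hr) as Hr'.
    assert (Hs' : is_sup (@leI _ (@gh_le Y)) S' (Ffun X Y f s)).
    { split.
      - intros b [a [Sa <-]]. apply Ffun_mono, Hs, Sa.
      - intros u Hu. split; simpl.
        + apply Hl'. intros y [x [[z [Sz <-]] <-]]. apply (Hu (Ffun X Y f z)). exists z; auto.
        + apply Hr'. intros y [x [[z [Sz <-]] <-]]. apply (Hu (Ffun X Y f z)). exists z; auto. }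
    destruct (HV2 _ _ HS' Hs' Hfs) as [b [[a [Sa <-]] Hb]]. exists a; auto.
Qed.

Definition Fmap (X Y : GHPoset) (f : GMor X Y) : INMor (Fobj X) (Fobj Y).
Proof.
  refine {| im_fun := Ffun X Y f : Fobj X -> Fobj Y |}.
  - exact (F_scott X Y f).
  - intros x. apply Ival_eq; reflexivity.
  - intros x. apply Ival_eq; reflexivity.
Defined.

Definition FF : Functor G_cat IN_cat.
Proof.
  refine (@Build_Functor G_cat IN_cat Fobj Fmap _ _ _).
  - intros X Y f g H x. apply Ival_eq; simpl; apply H.
  - intros X x. apply Ival_eq; reflexivity.
  - intros X Y Z g f x. apply Ival_eq; reflexivity.
Defined.

Definition Gobj (D : IntervalDomain) : GHPoset :=
  {| gh_car := MX (@in_le D);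
     gh_le := leX (@in_le D) (@in_left D) (@in_right D);
     gh_po := poX _ _ _ _ (in_po D) (in_ip D);
     gh_gh := ghX _ _ _ _ (in_po D) (in_ip D) (in_cdcpo D) (in_ax D) |}.

Lemma fmax (D E : IntervalDomain) (f : INMor D E) x :
  maximal (@in_le D) x -> maximal (@in_le E) (f x).
Proof.
  intros Hx. rewrite <- (LL _ _ _ _ (in_ip D) x Hx). rewrite (im_left f).
  apply (Lmax _ _ _ _ (in_ip E)).
Qed.

Definition Gfun (D E : IntervalDomain) (f : INMor D E) (x : MX (@in_le D)) : MX (@in_le E) :=
  exist _ (f (proj1_sig x)) (fmax D E f _ (proj2_sig x)).

Lemma mL_f (D E : IntervalDomain) (f : INMor D E) (w : MX (@in_le D)) :
  mkL _ _ _ _ (in_ip E) (f (proj1_sig w)) = Gfun D E f w.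
Proof.
  apply MX_eq; simpl. rewrite <- (im_left f). rewrite (LL _ _ _ _ (in_ip D) _ (proj2_sig w)). reflexivity.
Qed.
Lemma mR_f (D E : IntervalDomain) (f : INMor D E) (w : MX (@in_le D)) :
  mkR _ _ _ _ (in_ip E) (f (proj1_sig w)) = Gfun D E f w.
Proof.
  apply MX_eq; simpl. rewrite <- (im_right f). rewrite (RR _ _ _ _ (in_ip D) _ (proj2_sig w)). reflexivity.
Qed.

Lemma G_cont (D E : IntervalDomain) (f : INMor D E) :
  continuous_map (interval_open (leX (@in_le D) (@in_left D) (@in_right D)))
                 (interval_open (leX (@in_le E) (@in_left E) (@in_right E))) (Gfun D E f).
Proof.
  intros V HV x Hx. destruct (HV _ Hx) as [e [g [He [Hg Hn]]]].
  set (P := fun e' g' : MX (@in_le E) => e' = e /\ g' = g).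
  pose proof (scottU _ _ _ _ (in_po E) (in_ip E) (in_cdcpo E) (in_ax E) P) as HU.
  pose proof (@im_scott D E f _ HU) as HfU.
  destruct (approxX _ _ _ _ (in_po D) (in_ip D) (in_cdcpo D) (in_ax D) x) as [S [HS [Hs Hz]]].
  destruct (proj2 HfU S (proj1_sig x) HS Hs) as [z [Sz Uz]].
  { exists e, g; split; [split; auto|]. rewrite mL_f, mR_f. split; auto. }
  destruct (Hz z Sz) as [Hz1 Hz2].
  exists (mkL _ _ _ _ (in_ip D) z), (mkR _ _ _ _ (in_ip D) z). split; auto; split; auto.
  intros w W1 W2.
  assert (pD := poX _ _ _ _ (in_po D) (in_ip D)).
  assert (Hw : maximal (@in_le D) (proj1_sig w)) by apply proj2_sig.
  assert (Hzw : in_le z (proj1_sig w)).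
  { apply (le_of_ends _ _ _ _ (in_po D) (in_ip D)).
    - rewrite (LL _ _ _ _ (in_ip D) _ Hw). exact (wb_le pD W1).
    - rewrite (RR _ _ _ _ (in_ip D) _ Hw). exact (wb_le pD W2). }
  assert (Hfzw := scott_mono _ _ _ _ (in_po E) f (@im_scott D E f) _ _ Hzw).
  destruct (proj1 HU _ _ Uz Hfzw) as [e' [g' [[-> ->] [U1 U2]]]].
  rewrite mL_f in U1. rewrite mR_f in U2. apply Hn; auto.
Qed.

Definition Gmap (D E : IntervalDomain) (f : INMor D E) : GMor (Gobj D) (Gobj E).
Proof.
  refine {| gm_fun := Gfun D E f : Gobj D -> Gobj E |}.
  - intros x y [z [E1 E2]]. exists (f z). simpl. rewrite <- (im_left f), <- (im_right f), E1, E2.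
    split; reflexivity.
  - exact (G_cont D E f).
Defined.

Definition GG : Functor IN_cat G_cat.
Proof.
  refine (@Build_Functor IN_cat G_cat Gobj Gmap _ _ _).
  - intros X Y f g H x. apply MX_eq; simpl; apply H.
  - intros X x. apply MX_eq; reflexivity.
  - intros X Y Z g f x. apply MX_eq; reflexivity.
Defined.

Section IsoG.
Variable X : GHPoset.
Let pX := gh_po X.
Definition MXI := MX (@leI X (@gh_le X)).
Let lxI := leX (@leI X (@gh_le X)) (leftI pX) (rightI pX).

Definition aGf (p : MXI) : X := lo (proj1_sig p).
Definition bGf (x : X) : MXI :=
  exist _ (mkI (le_refl pX x)) (proj2 (maxI pX (mkI (le_refl pX x))) eq_refl).

Lemma aGb x : aGf (bGf x) = x. Proof. reflexivity. Qed.
Lemma bGa p : bGf (aGf p) = p.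
Proof.
  apply MX_eq. apply Ival_eq; [reflexivity|]. simpl.
  apply (maxI pX), proj2_sig.
Qed.
Lemma aG_mono p q : lxI p q -> gh_le (aGf p) (aGf q).
Proof.
  intros [z [E1 E2]]. unfold aGf. rewrite <- E1, <- E2. simpl. apply ok.
Qed.
Lemma bG_mono x y : gh_le x y -> lxI (bGf x) (bGf y).
Proof.
  intros H. exists (mkI H). split; apply Ival_eq; reflexivity.
Qed.

Definition aG : GMor (Gobj (Fobj X)) X.
Proof.
  refine {| gm_fun := aGf : Gobj (Fobj X) -> X |}.
  - exact aG_mono.
  - exact (iso_int_cont _ _ lxI (@gh_le X) aGf bGf aGb bGa aG_mono bG_mono).
Defined.

Definition bG : GMor X (Gobj (Fobj X)).
Proof.
  refine {| gm_fun := bGf : X -> Gobj (Fobj X) |}.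
  - exact bG_mono.
  - exact (iso_int_cont _ _ (@gh_le X) lxI bGf aGf bGa aGb bG_mono aG_mono).
Defined.
End IsoG.

Lemma isoG : @iso_to_identity G_cat (fun X => fobj GG (fobj FF X))
                    (fun X Y f => fmap GG (fmap FF f)).
Proof.
  exists aG, bG. split; [|split].
  - intros X x. reflexivity.
  - intros X p. simpl. apply bGa.
  - intros X Y f p. reflexivity.
Qed.

Section IsoI.
Variable D : IntervalDomain.
Let le := @in_le D.
Let L := @in_left D.
Let R := @in_right D.
Let po := in_po D.
Let ip := in_ip D.
Let lx := leX le L R.
Definition IvD := Ival lx.

Definition aIf (w : IvD) : D :=
  proj1_sig (constructive_indefinite_description
    (fun z => L z = proj1_sig (lo w) /\ R z = proj1_sig (hi w)) (ok w)).

Lemma aI_L w : L (aIf w) = proj1_sig (lo w).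
Proof. unfold aIf. destruct constructive_indefinite_description as [z [H1 H2]]. exact H1. Qed.
Lemma aI_R w : R (aIf w) = proj1_sig (hi w).
Proof. unfold aIf. destruct constructive_indefinite_description as [z [H1 H2]]. exact H2. Qed.

Definition bIf (z : D) : IvD :=
  @mkI _ lx (mkL _ _ _ _ ip z) (mkR _ _ _ _ ip z) (ex_intro _ z (conj eq_refl eq_refl)).

Lemma aIb z : aIf (bIf z) = z.
Proof. apply (uniqD _ le L R po ip); rewrite ?aI_L, ?aI_R; reflexivity. Qed.
Lemma bIa w : bIf (aIf w) = w.
Proof. apply Ival_eq; apply MX_eq; simpl; [apply aI_L|apply aI_R]. Qed.

Lemma aI_mono w w' : leI w w' -> le (aIf w) (aIf w').
Proof.
  intros [H1 H2]. apply (le_of_ends _ le L R po ip).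
  - rewrite !aI_L. exact H1.
  - rewrite !aI_R. exact H2.
Qed.
Lemma bI_mono z z' : le z z' -> leI (bIf z) (bIf z').
Proof.
  intros H. destruct (ends_of_le _ le L R po ip z z' H) as [H1 H2]. split; simpl; auto.
Qed.

Definition aI : INMor (Fobj (Gobj D)) D.
Proof.
  refine {| im_fun := aIf : Fobj (Gobj D) -> D |}.
  - exact (iso_scott _ _ (@leI _ lx) le aIf bIf aIb bIa aI_mono bI_mono).
  - intros w. apply (uniqD _ le L R po ip).
    + change (L (aIf (leftI (gh_po (Gobj D)) w)) = L (L (aIf w))).
      rewrite aI_L, (LL _ le L R ip _ (Lmax _ le L R ip _)), aI_L. reflexivity.
    + change (R (aIf (leftI (gh_po (Gobj D)) w)) = R (L (aIf w))).
      rewrite aI_R, (RR _ le L R ip _ (Lmax _ le L R ip _)), aI_L. reflexivity.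
  - intros w. apply (uniqD _ le L R po ip).
    + change (L (aIf (rightI (gh_po (Gobj D)) w)) = L (R (aIf w))).
      rewrite aI_L, (LL _ le L R ip _ (Rmax _ le L R ip _)), aI_R. reflexivity.
    + change (R (aIf (rightI (gh_po (Gobj D)) w)) = R (R (aIf w))).
      rewrite aI_R, (RR _ le L R ip _ (Rmax _ le L R ip _)), aI_R. reflexivity.
Defined.

Definition bI : INMor D (Fobj (Gobj D)).
Proof.
  refine {| im_fun := bIf : D -> Fobj (Gobj D) |}.
  - exact (iso_scott _ _ le (@leI _ lx) bIf aIf bIa aIb bI_mono aI_mono).
  - intros z. apply Ival_eq; apply MX_eq; simpl.
    + apply (LL _ le L R ip _ (Lmax _ le L R ip _)).
    + apply (RR _ le L R ip _ (Lmax _ le L R ip _)).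
  - intros z. apply Ival_eq; apply MX_eq; simpl.
    + apply (LL _ le L R ip _ (Rmax _ le L R ip _)).
    + apply (RR _ le L R ip _ (Rmax _ le L R ip _)).
Defined.
End IsoI.

Lemma isoI : @iso_to_identity IN_cat (fun D => fobj FF (fobj GG D))
                    (fun X Y f => fmap FF (fmap GG f)).
Proof.
  exists aI, bI. split; [|split].
  - intros D z. simpl. apply aIb.
  - intros D w. simpl. apply bIa.
  - intros D E f w. simpl.
    apply (uniqD _ _ _ _ (in_po E) (in_ip E)).
    + rewrite aI_L. rewrite <- (im_left f). rewrite aI_L. reflexivity.
    + rewrite aI_R. rewrite <- (im_right f). rewrite aI_R. reflexivity.
Qed.

Theorem mainTheorem16 : equivalent G_cat IN_cat.
Proof.
  exists FF, GG. split; [exact isoG|exact isoI].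
Qed.
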